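(* Let $V$ be a finite-dimensional vector space over $\mathbb{F}_q$. A metric $d$ on $V$ is a projective metric if and only if it is integral, (integrally) convex, scale-invariant and translation-invariant.
   Context: For a set $\mathcal{F}\subset V$ of pairwise linearly independent (in particular nonzero) vectors, the projective weight is $\operatorname{wt}_{\mathcal{F}}(x)=\min(\{|I|: I\subseteq\mathcal{F},\ x\in\langle I\rangle\}\cup\{\infty\})$ (with $\langle\emptyset\rangle=\{0\}$), and $d_{\mathcal{F}}(x,y)=\operatorname{wt}_{\mathcal{F}}(y-x)$; a metric is projective if it equals $d_{\mathcal{F}}$ for some such $\mathcal{F}$. A metric $d:V\times V\to\mathbb{R}\cup\{\infty\}$ is integral if it takes values in $\mathbb{N}\cup\{\infty\}$; scale-invariant if $d(\alpha x,\alpha y)=d(x,y)$ for all nonzero $\alpha\in\mathbb{F}_q$; translation-invariant if $d(x+z,y+z)=d(x,y)$. An integral metric is convex if for all $v_1,v_2$ with $d(v_1,v_2)<\infty$ and all $i\in\{0,\dots,d(v_1,v_2)\}$ there is $x\in V$ with $d(v_1,x)=i$ and $d(x,v_2)=d(v_1,v_2)-i$. *)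

(* Defs.v *)
From HB Require Import structures.
From mathcomp Require Import all_boot all_order all_algebra.
From mathcomp Require Import reals constructive_ereal.

Set Implicit Arguments. Unset Strict Implicit. Unset Printing Implicit Defensive.
Import Order.TTheory GRing.Theory Num.Theory.
Local Open Scope ring_scope.

Section Defs.
Variables (R : realType) (K : finFieldType) (n : nat).
Local Notation V := 'rV[K]_n.

Definition is_metric (d : V -> V -> \bar R) : Prop :=
  [/\ forall x y, (0 <= d x y)%E,
      forall x y, d x y = 0%E <-> x = y,
      forall x y, d x y = d y x &
      forall x y z, (d x z <= d x y + d y z)%E].

Definition pairwise_li (F : {set V}) : Prop :=
  (forall x, x \in F -> x != 0) /\
  (forall x y, x \in F -> y \in F -> x != y -> free [:: x; y]).

Definition spans_in (F : {set V}) (x : V) (I : {set V}) : bool :=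
  (I \subset F) && (x \in <<enum I>>%VS).

Definition proj_wt (F : {set V}) (x : V) : \bar R :=
  if [exists I, spans_in F x I]
  then ((\big[minn/#|F|]_(I | spans_in F x I) #|I|)%:R)%:E
  else +oo%E.

Definition proj_dist (F : {set V}) (x y : V) : \bar R := proj_wt F (y - x).

Definition is_projective (d : V -> V -> \bar R) : Prop :=
  exists F : {set V}, pairwise_li F /\ forall x y, d x y = proj_dist F x y.

Definition integral (d : V -> V -> \bar R) : Prop :=
  forall x y, d x y = +oo%E \/ exists k : nat, d x y = (k%:R)%:E.

Definition scale_invariant (d : V -> V -> \bar R) : Prop :=
  forall (a : K) x y, a != 0 -> d (a *: x) (a *: y) = d x y.

Definition translation_invariant (d : V -> V -> \bar R) : Prop :=
  forall x y z, d (x + z) (y + z) = d x y.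

Definition convex (d : V -> V -> \bar R) : Prop :=
  forall v1 v2 (k : nat), d v1 v2 = (k%:R)%:E ->
  forall i : nat, (i <= k)%N ->
  exists x, d v1 x = (i%:R)%:E /\ d x v2 = ((k - i)%N%:R)%:E.

End Defs.

(* Main.v *)
Require Import Defs.
From HB Require Import structures.
From mathcomp Require Import all_boot all_order all_algebra.
From mathcomp Require Import reals constructive_ereal.
From mathcomp Require Import zify.
Set Implicit Arguments. Unset Strict Implicit. Unset Printing Implicit Defensive.
Import Order.TTheory GRing.Theory Num.Theory.
Local Open Scope ring_scope.

Section Bigmin.
Variables (I : finType) (P : pred I) (f : I -> nat) (z : nat).

Lemma bigmin_le_seq s j : j \in s -> P j -> (\big[minn/z]_(i <- s | P i) f i <= f j)%N.
Proof.
move=> + Pj; elim: s => // a s IH; rewrite inE big_cons; case/orP => [/eqP<-|js].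
  by rewrite Pj geq_minl.
case: (P a); last exact: IH.
exact: leq_trans (geq_minr _ _) (IH js).
Qed.

Lemma bigmin_le j : P j -> (\big[minn/z]_(i | P i) f i <= f j)%N.
Proof. by apply: bigmin_le_seq; rewrite mem_index_enum. Qed.

Lemma bigmin_attain : \big[minn/z]_(i | P i) f i = z \/
   exists2 i, P i & f i = \big[minn/z]_(i | P i) f i.
Proof.
apply: (big_ind (fun m => m = z \/ exists2 i, P i & f i = m)); first by left.
  by move=> x y Hx Hy /=; case: (leqP x y).
by move=> i Pi; right; exists i.
Qed.
End Bigmin.

Lemma natE_inj (R : realType) (m k : nat) :
  ((m%:R)%:E : \bar R) = (k%:R)%:E -> m = k.
Proof. by move=> [] /eqP; rewrite eqr_nat => /eqP. Qed.

Lemma natE_le (R : realType) (m k : nat) :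
  (((m%:R)%:E : \bar R) <= (k%:R)%:E)%E = (m <= k)%N.
Proof. by rewrite lee_fin ler_nat. Qed.

Lemma natE_add (R : realType) (m k : nat) :
  (((m%:R)%:E : \bar R) + (k%:R)%:E)%E = ((m + k)%N%:R)%:E.
Proof. by rewrite -EFinD natrD. Qed.

Section Proj.
Variables (R : realType) (K : finFieldType) (n : nat).
Local Notation V := 'rV[K]_n.
Implicit Types (F : {set V}) (x : V).

Lemma wt_le F x I : spans_in F x I ->
  exists2 m, proj_wt R F x = (m%:R)%:E & (m <= #|I|)%N.
Proof.
move=> HI; rewrite /proj_wt; case: ifP => [_|]; last by move=> /negbT/existsPn/(_ I); rewrite HI.
by eexists; [reflexivity| exact: bigmin_le].
Qed.

Lemma wt_cases F x :
  (proj_wt R F x = +oo%E /\ forall I, ~~ spans_in F x I) \/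
  exists2 I, spans_in F x I & proj_wt R F x = (#|I|%:R)%:E.
Proof.
rewrite /proj_wt; case: ifP => [/existsP [I0 HI0]|/negbT/existsPn Hn]; last first.
  by left.
right; case: (bigmin_attain (fun I => spans_in F x I) (fun I => #|I|) #|F|) => [E|[I HI E]].
  exists I0 => //; congr (_%:R)%:E; apply/eqP; rewrite eqn_leq bigmin_le //=.
  rewrite E; apply: subset_leq_card; by case/andP: HI0.
by exists I => //; rewrite E.
Qed.

Lemma wt_integral F x : proj_wt R F x = +oo%E \/ exists k : nat, proj_wt R F x = (k%:R)%:E.
Proof. by rewrite /proj_wt; case: ifP => _; [right; eexists|left]. Qed.

Lemma wt_scale F x (a : K) : a != 0 -> proj_wt R F (a *: x) = proj_wt R F x.
Proof.
move=> a0; have E : spans_in F (a *: x) =1 spans_in F x.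
  by move=> I; rewrite /spans_in rpredZeq (negbTE a0).
by rewrite /proj_wt (eq_existsb E) (eq_bigl _ _ E).
Qed.


Lemma convex_of_step (d : V -> V -> \bar R) : is_metric d -> integral d ->
  (forall v1 v2 (k : nat), d v1 v2 = (k.+1%:R)%:E ->
     exists x, d v1 x = (k%:R)%:E /\ d x v2 = (1%:R)%:E) -> convex d.
Proof.
move=> [_ H0 _ Htri] Hint Hstep v1 v2 k Hk i ik.
suff: forall j, (j <= k)%N -> exists x, d v1 x = ((k - j)%N%:R)%:E /\ d x v2 = (j%:R)%:E.
  by move/(_ (k - i)%N (leq_subr _ _)); rewrite subKn.
elim=> [|j IH] jk.
  by exists v2; rewrite subn0 Hk; split => //; apply/H0.
have [x [H1 H2]] := IH (ltnW jk).
have Ekj : (k - j)%N = (k - j.+1).+1 by lia.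
rewrite Ekj in H1; have [x' [H3 H4]] := Hstep _ _ _ H1.
exists x'; split => //.
have T1 := Htri x' x v2; rewrite H4 H2 natE_add in T1.
have T2 := Htri v1 x' v2; rewrite Hk H3 in T2.
case: (Hint x' v2) => [Eoo|[m Em]].
  by rewrite Eoo leye_eq in T1.
rewrite Em natE_le in T1; rewrite Em natE_add natE_le in T2.
by rewrite Em; congr (_%:R)%:E; lia.
Qed.

Lemma forward F (d : V -> V -> \bar R) : is_metric d -> pairwise_li F ->
  (forall x y, d x y = proj_dist R F x y) ->
  [/\ integral d, convex d, scale_invariant d & translation_invariant d].
Proof.
move=> Hm _ Hd; have Hint : integral d.
  by move=> x y; rewrite Hd; apply: wt_integral.
split => //.
- apply: convex_of_step => // v1 v2 k; rewrite Hd /proj_dist => Hk.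
  case: (wt_cases F (v2 - v1)) => [[Hoo _]|[I HI EI]]; first by rewrite Hk in Hoo.
  rewrite Hk in EI; move/natE_inj: EI => EI.
  have /card_gt0P [f fI] : (0 < #|I|)%N by rewrite -EI.
  case/andP: HI => IF Hspan.
  have fF : f \in F by apply: (subsetP IF).
  have Es : enum I =i f :: enum (I :\ f).
    by move=> y; rewrite in_cons !mem_enum in_setD1; case: eqP => // ->.
  rewrite (eq_span Es) span_cons in Hspan.
  case/memv_addP: Hspan => u Hu [w Hw Euw].
  exists (v1 + w); rewrite !Hd /proj_dist.
  have Sw : spans_in F w (I :\ f).
    by rewrite /spans_in Hw andbT; apply: subset_trans (subsetDl _ _) IF.
  have Su : spans_in F u [set f].
    by rewrite /spans_in sub1set fF enum_set1 span_seq1.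
  have [m Em mle] := wt_le Sw.
  have [m' Em' m'le] := wt_le Su.
  have E1 : v1 + w - v1 = w by rewrite addrC addKr.
  have E2 : v2 - (v1 + w) = u by rewrite opprD addrA Euw addrK.
  rewrite E1 E2 Em Em'.
  case: Hm => _ _ _ Htri.
  have := Htri v1 (v1 + w) v2; rewrite !Hd /proj_dist Hk E1 E2 Em Em' natE_add natE_le.
  have Ecd := cardsD1 f I; rewrite fI add1n -EI in Ecd; case: Ecd => Ecd.
  rewrite cards1 in m'le; rewrite -Ecd in mle.
  move=> T; split; congr (_%:R)%:E; lia.
- move=> a x y a0; rewrite !Hd /proj_dist -scalerBr; exact: wt_scale.
- move=> x y z; rewrite !Hd /proj_dist; congr proj_wt.
  by rewrite opprD addrACA subrr addr0.
Qed.


Section Backward.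
Variable d : V -> V -> \bar R.
Hypotheses (Hm : is_metric d) (Hint : integral d) (Hcv : convex d)
  (Hs : scale_invariant d) (Ht : translation_invariant d).

Let Htr x y : d x y = d 0 (y - x).
Proof. by rewrite -(Ht x y (- x)) subrr. Qed.

Let Hsc0 (a : K) v : a != 0 -> d 0 (a *: v) = d 0 v.
Proof. by move=> a0; rewrite -{1}(scaler0 _ a) Hs. Qed.

Let H00 : d 0 0 = 0%E.
Proof. by case: Hm => _ H0 _ _; apply/H0. Qed.

Definition FF : {set V} := [set f : V | (d 0 f == 1%:E) &&
  [forall a : K, (a != 0) ==> (enum_rank f <= enum_rank (a *: f))%N]].

Lemma FF1 f : f \in FF -> d 0 f = 1%:E.
Proof. by rewrite inE => /andP [/eqP]. Qed.

Lemma FFmin f (a : K) : f \in FF -> a != 0 -> (enum_rank f <= enum_rank (a *: f))%N.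
Proof. by rewrite inE => /andP [_ /forallP /(_ a) /implyP]; apply. Qed.

Lemma repr y : d 0 y = 1%:E -> exists2 f, f \in FF & y \in <[f]>%VS.
Proof.
move=> Hy.
pose P g := [exists a : K, (a != 0) && (g == a *: y)].
have Py : P y by apply/existsP; exists 1; rewrite oner_eq0 scale1r eqxx.
case: (arg_minnP (fun g => nat_of_ord (enum_rank g)) Py) => f /existsP [a /andP [a0 /eqP ->]] Hmin.
exists (a *: y).
  rewrite inE Hsc0 // Hy eqxx /=; apply/forallP => b; apply/implyP => b0.
  apply: Hmin; apply/existsP; exists (b * a); rewrite mulf_neq0 // scalerA eqxx.
  by [].
have Ey : a^-1 *: (a *: y) = y by rewrite scalerA mulVf // scale1r.
by rewrite -{1}Ey; apply: memvZ; apply: memv_line.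
Qed.

Lemma FF_li : pairwise_li FF.
Proof.
have nz : forall x, x \in FF -> x != 0.
  move=> x /FF1 H; apply/eqP => x0; rewrite x0 H00 in H.
  by move/eqP: H; rewrite eqe eq_sym oner_eq0.
split => // x y xF yF xy.
rewrite free_cons seq1_free nz // andbT span_seq1.
apply/negP => /vlineP [a Ea].
have a0 : a != 0 by apply: contraTneq (nz _ xF) => a0; rewrite Ea a0 scale0r eqxx.
have r1 := FFmin yF a0; rewrite -Ea in r1.
have r2 := FFmin xF (invr_neq0 a0).
rewrite Ea scalerA mulVf // scale1r -Ea in r2.
have : enum_rank x = enum_rank y by apply: val_inj; apply/eqP; rewrite eqn_leq r1 r2.
by move/enum_rank_inj => exy; rewrite exy eqxx in xy.
Qed.

Lemma lower s : (forall f, f \in s -> f \in FF) -> forall x, x \in <<s>>%VS ->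
  (d 0 x <= ((size s)%:R)%:E)%E.
Proof.
elim: s => [|f s IH] HF x.
  by rewrite span_nil memv0 => /eqP ->; rewrite H00 lexx.
rewrite span_cons => /memv_addP [u /vlineP [a ->] [w Hw ->]].
case: Hm => _ _ _ Htri.
apply: le_trans (Htri _ (a *: f) _) _.
rewrite [X in (_ + X)%E]Htr.
have -> : a *: f + w - a *: f = w by rewrite addrAC subrr add0r.
have -> : size (f :: s) = (1 + size s)%N by [].
rewrite -natE_add; apply: leeD.
  have [->|a0] := eqVneq a 0; first by rewrite scale0r H00 lee_fin ler0n.
  by rewrite Hsc0 // FF1 // HF // mem_head.
by apply: IH => // g gs; apply: HF; rewrite inE gs orbT.
Qed.

Lemma upper k x : d 0 x = (k%:R)%:E ->
  exists I : {set V}, [/\ I \subset FF, (#|I| <= k)%N & x \in <<enum I>>%VS].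
Proof.
elim: k x => [|k IH] x Hx.
  have x0 : 0 = x by case: Hm => _ H0 _ _; apply/H0.
  by exists set0; rewrite sub0set cards0 -x0 mem0v.
have [z [Hz Hzx]] := Hcv Hx (leqnSn k).
rewrite subSnn in Hzx.
have [I [IF Ik Iz]] := IH z Hz.
rewrite Htr in Hzx.
have [f fF Hf] := repr Hzx.
exists (f |: I); split.
- by rewrite subUset sub1set fF IF.
- rewrite cardsU1; case: (f \in I) => /=; [rewrite add0n; exact: leq_trans Ik _ | by rewrite add1n ltnS].
have Es : enum (f |: I) =i f :: enum I.
  by move=> y; rewrite in_cons !mem_enum in_setU1.
rewrite (eq_span Es) span_cons -(subrK z x); exact: memv_add.
Qed.

Lemma wt_eq v : proj_wt R FF v = d 0 v.
Proof.
have lowI : forall I, spans_in FF v I -> (d 0 v <= (#|I|%:R)%:E)%E.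
  move=> I /andP [IF Hv]; rewrite cardE; apply: lower Hv => f.
  by rewrite mem_enum; apply: (subsetP IF).
case: (Hint 0 v) => [Eoo|[k Ek]].
  case: (wt_cases FF v) => [[-> _]|[I HI _]] //.
  by have := lowI _ HI; rewrite Eoo leye_eq.
have [I0 [I0F I0k I0v]] := upper Ek.
have S0 : spans_in FF v I0 by rewrite /spans_in I0F.
case: (wt_cases FF v) => [[_ Hn]|[I HI EI]]; first by have := Hn I0; rewrite S0.
have [m Em mle] := wt_le S0.
rewrite EI in Em; move/natE_inj: Em => Em.
have := lowI _ HI; rewrite Ek natE_le => kI.
rewrite EI; congr (_%:R)%:E; apply/eqP; rewrite eqn_leq kI andbT Em; exact: leq_trans mle I0k.
Qed.

End Backward.
End Proj.

Theorem proposition3p2 (R : realType) (K : finFieldType) (n : nat)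
  (d : 'rV[K]_n -> 'rV[K]_n -> \bar R) :
  is_metric d ->
  (is_projective d <->
   [/\ integral d, convex d, scale_invariant d & translation_invariant d]).
Proof.
move=> Hm; split.
  by case=> F [HF Hd]; apply: (forward Hm HF Hd).
case=> Hint Hcv Hs Ht; exists (FF d); split; first exact: FF_li.
move=> x y; rewrite /proj_dist wt_eq //.
by rewrite -(Ht x y (- x)) subrr.
Qed.
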